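(* Let $n\ge6$ and let $\mathfrak g$ be an $n$-dimensional filiform Lie algebra with associated triple $(n-2,n-2,n)$. Then $$\mathrm{HP}_{\mathfrak g}(t,s)=\mathrm{HP}^{(0)}_{\mathfrak g}(t,s)+t^2s^3+t^3s^2+t^2s^2.$$
   Context: All Lie algebras are over $\mathbb C$; $C^1\mathfrak g=\mathfrak g$, $C^k\mathfrak g=[C^{k-1}\mathfrak g,\mathfrak g]$. A Lie algebra is filiform if $\dim\mathfrak g=n\ge2$ and $\dim C^k\mathfrak g=n-k$ for $2\le k\le n$. An adapted basis of a filiform $\mathfrak g$ is a basis $\{e_1,\dots,e_n\}$ with $[e_1,e_h]=e_{h-1}$ ($3\le h\le n$), $[e_2,e_h]=0$ ($1\le h\le n$), $[e_3,e_h]=0$ ($2\le h\le n$). For non-model filiform $\mathfrak g$, $z_1=\min\{k\ge4:[e_k,e_n]\ne0\}$, $z_2=\min\{k\ge4:[e_k,e_{k+1}]\ne0\}$ (in any adapted basis) are isomorphism invariants; $(z_1,z_2,n)$ is the associated triple. The Hilbert polynomial is $\mathrm{HP}_{\mathfrak g}(t,s)=\sum_{k,\ell\ge1}\dim[C^k\mathfrak g,C^\ell\mathfrak g]\,t^ks^\ell$, and for filiform $\mathfrak g$ of dimension $n$, $\mathrm{HP}^{(0)}_{\mathfrak g}(t,s)=(n-2)ts+\sum_{2\le k\le n-2}(n-k-1)(t^ks+ts^k)$ (the part of $\mathrm{HP}_{\mathfrak g}$ with $k=1$ or $\ell=1$). *)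

(* Defs.v *)
From HB Require Import structures.
From mathcomp Require Import all_boot all_order all_algebra.
From mathcomp Require Import reals complex.
Set Implicit Arguments. Unset Strict Implicit. Unset Printing Implicit Defensive.
Import Order.TTheory GRing.Theory Num.Theory.
Local Open Scope ring_scope.

Section Lie.
Variable (F : fieldType) (V : vectType F) (br : V -> V -> V).

Definition is_lie : Prop :=
  [/\ (forall (a : F) (x y z : V), br (a *: x + y) z = a *: br x z + br y z),
      (forall (a : F) (x y z : V), br z (a *: x + y) = a *: br z x + br z y),
      (forall x : V, br x x = 0) &
      (forall x y z : V, br x (br y z) + br y (br z x) + br z (br x y) = 0)].

(* [A, B] : the subspace spanned by all brackets [a, b], a in A, b in B
   (by bilinearity, spanned by brackets of basis vectors). *)
Definition brS (A B : {vspace V}) : {vspace V} :=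
  (<<[seq br a b | a <- vbasis A, b <- vbasis B]>>)%VS.

(* Lower central series, C^1 = g, C^k = [C^(k-1), g]; C^0 := g by convention. *)
Fixpoint LCS (k : nat) : {vspace V} :=
  match k with
  | 0 => fullv
  | 1 => fullv
  | k'.+1 => brS (LCS k') fullv
  end.

Definition filiform : Prop :=
  (2 <= \dim {:V})%N /\
  forall k, (2 <= k <= \dim {:V})%N -> \dim (LCS k) = (\dim {:V} - k)%N.

(* A basis e_1, ..., e_n (1-based indexing, e : nat -> V). *)
Definition is_basis (e : nat -> V) : Prop :=
  basis_of fullv [seq e i | i <- iota 1 (\dim {:V})].

Definition adapted (e : nat -> V) : Prop :=
  let n := \dim {:V} in
  [/\ is_basis e,
      (forall h, (3 <= h <= n)%N -> br (e 1%N) (e h) = e h.-1),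
      (forall h, (1 <= h <= n)%N -> br (e 2%N) (e h) = 0) &
      (forall h, (2 <= h <= n)%N -> br (e 3%N) (e h) = 0)].

Definition is_model : Prop :=
  let n := \dim {:V} in
  exists e : nat -> V,
  [/\ is_basis e,
      (forall h, (3 <= h <= n)%N -> br (e 1%N) (e h) = e h.-1),
      br (e 1%N) (e 2%N) = 0 &
      (forall i j, (2 <= i <= n)%N -> (2 <= j <= n)%N -> br (e i) (e j) = 0)].

Definition is_min_from4 (P : nat -> Prop) (m : nat) : Prop :=
  [/\ (4 <= m)%N, P m & forall k, (4 <= k < m)%N -> ~ P k].

Definition z1_is (e : nat -> V) (m : nat) : Prop :=
  is_min_from4 (fun k => br (e k) (e (\dim {:V})) <> 0) m.

Definition z2_is (e : nat -> V) (m : nat) : Prop :=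
  is_min_from4 (fun k => br (e k) (e k.+1) <> 0) m.

(* Associated triple (z1, z2, n) of a non-model filiform algebra, computed in an
   adapted basis (it is independent of the adapted basis). *)
Definition assoc_triple (a b n : nat) : Prop :=
  [/\ filiform, ~ is_model, \dim {:V} = n &
      exists e, [/\ adapted e, z1_is e a & z2_is e b]].

End Lie.

(* Bivariate integer polynomials in t, s: {poly {poly int}}, outer variable t,
   inner variable s.  tm k l = t^k s^l. *)
Definition tm (k l : nat) : {poly {poly int}} := ('X^l)%:P * 'X^k.

(* Hilbert polynomial: sum over k, l >= 1 of dim [C^k, C^l] t^k s^l.
   The sum is truncated at k, l <= dim g; for nilpotent (e.g. filiform) g
   C^k = 0 for k >= dim g, so nothing is lost. *)
Definition HP (F : fieldType) (V : vectType F) (br : V -> V -> V) :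
    {poly {poly int}} :=
  \sum_(1 <= k < (\dim {:V}).+1) \sum_(1 <= l < (\dim {:V}).+1)
     (\dim (brS br (LCS br k) (LCS br l)))%:R * tm k l.

Definition HP0 (n : nat) : {poly {poly int}} :=
  (n - 2)%:R * tm 1 1 + \sum_(2 <= k < n - 1) (n - k - 1)%:R * (tm k 1 + tm 1 k).

(* Main.v *)
Require Import Defs.
From HB Require Import structures.
From mathcomp Require Import all_boot all_order all_algebra.
From mathcomp Require Import reals complex.
From mathcomp Require Import zify ring.
Import GRing.Theory.
Local Open Scope ring_scope.


Section Br.
Context {F : fieldType} {V : vectType F} {br : V -> V -> V}.

Lemma br0l : is_lie br -> forall z, br 0 z = 0.
Proof.
case=> H1 _ _ _ z. have := H1 1 0 0 z. rewrite !scale1r addr0.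
by move=> E; apply: (addrI (br 0 z)); rewrite addr0 -E.
Qed.
Lemma br0r : is_lie br -> forall z, br z 0 = 0.
Proof.
case=> _ H2 _ _ z. have := H2 1 0 0 z. rewrite !scale1r addr0.
by move=> E; apply: (addrI (br z 0)); rewrite addr0 -E.
Qed.
Lemma brDl : is_lie br -> forall x y z, br (x + y) z = br x z + br y z.
Proof. by move=> H x y z; move: (H) => [H1 _ _ _]; rewrite -{1}[x]scale1r H1 scale1r. Qed.
Lemma brDr : is_lie br -> forall x y z, br z (x + y) = br z x + br z y.
Proof. by move=> H x y z; move: (H) => [_ H2 _ _]; rewrite -{1}[x]scale1r H2 scale1r. Qed.
Lemma brZl : is_lie br -> forall a x z, br (a *: x) z = a *: br x z.
Proof. by move=> H a x z; move: (H) => [H1 _ _ _]; rewrite -[a *: x]addr0 H1 (br0l H) addr0. Qed.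
Lemma brZr : is_lie br -> forall a x z, br z (a *: x) = a *: br z x.
Proof. by move=> H a x z; move: (H) => [_ H2 _ _]; rewrite -[a *: x]addr0 H2 (br0r H) addr0. Qed.
Lemma brA : is_lie br -> forall x y, br x y = - br y x.
Proof.
move=> H x y; move: (H) => [_ _ H3 _]; have := H3 (x + y).
rewrite (brDl H) !(brDr H) !H3 add0r addr0 => /eqP; rewrite addr_eq0 => /eqP //.
Qed.
Lemma brNl : is_lie br -> forall x z, br (- x) z = - br x z.
Proof. by move=> H x z; rewrite -scaleN1r (brZl H) scaleN1r. Qed.
Lemma brsuml (I : Type) (r : seq I) (P : pred I) (f : I -> V) z :
  is_lie br -> br (\sum_(i <- r | P i) f i) z = \sum_(i <- r | P i) br (f i) z.
Proof.
move=> H; elim/big_rec2: _ => [|i y1 y2 _ E]; first exact: br0l.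
by rewrite (brDl H) ?E -?E.
Qed.
Lemma brsumr (I : Type) (r : seq I) (P : pred I) (f : I -> V) z :
  is_lie br -> br z (\sum_(i <- r | P i) f i) = \sum_(i <- r | P i) br z (f i).
Proof.
move=> H; elim/big_rec2: _ => [|i y1 y2 _ E]; first exact: br0r.
by rewrite (brDr H) ?E -?E.
Qed.

Lemma br_span (X Y : seq V) x y :
  is_lie br -> x \in <<X>>%VS -> y \in <<Y>>%VS ->
  br x y \in <<[seq br a b | a <- X, b <- Y]>>%VS.
Proof.
move=> H /(coord_span (X := in_tuple X)) -> /(coord_span (X := in_tuple Y)) ->.
rewrite (brsuml _ _ _ _ _ H); apply: memv_suml => i _.
rewrite (brsumr _ _ _ _ _ H); apply: memv_suml => j _.
rewrite (brZl H) (brZr H) !memvZ // memv_span //.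
apply/allpairsP; exists ((in_tuple X)`_i, (in_tuple Y)`_j); split => //; by rewrite mem_nth ?size_tuple.
Qed.

Lemma brS_mem (A B : {vspace V}) x y :
  is_lie br -> x \in A -> y \in B -> br x y \in brS br A B.
Proof.
move=> H xA yB; apply: br_span => //.
  by rewrite (span_basis (vbasisP A)).
by rewrite (span_basis (vbasisP B)).
Qed.

Lemma brS_sub (A B : {vspace V}) X Y :
  is_lie br -> (A <= <<X>>)%VS -> (B <= <<Y>>)%VS ->
  (brS br A B <= <<[seq br a b | a <- X, b <- Y]>>)%VS.
Proof.
move=> H /subvP sA /subvP sB; apply/span_subvP => _ /allpairsP[[a b] /= [Ha Hb ->]].
by apply: br_span => //; [apply: sA | apply: sB]; apply: vbasis_mem.
Qed.

Lemma brS_sym (A B : {vspace V}) :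
  is_lie br -> brS br A B = brS br B A.
Proof.
move=> H; have gen : forall A B : {vspace V}, (brS br A B <= brS br B A)%VS.
  move=> A' B'; apply/span_subvP => _ /allpairsP[[a b] /= [Ha Hb ->]].
  by rewrite (brA H) memvN brS_mem // vbasis_mem.
by apply: subv_anti; rewrite !gen.
Qed.
End Br.



Section Struct.
Context {F : fieldType} {V : vectType F} {br : V -> V -> V}.
Context (H : is_lie br) (n : nat) (e : nat -> V) (Hn : (6 <= n)%N).
Context (A1 : forall h, (3 <= h <= n)%N -> br (e 1%N) (e h) = e h.-1).
Context (A2 : forall h, (1 <= h <= n)%N -> br (e 2%N) (e h) = 0).
Context (A3 : forall h, (2 <= h <= n)%N -> br (e 3%N) (e h) = 0).
Context (Z1 : forall k, (4 <= k < n - 2)%N -> br (e k) (e n) = 0).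

Let f i j := br (e i) (e j).

Lemma brNr : forall x z, br z (- x) = - br z x.
Proof. by move=> x z; rewrite -scaleN1r (brZr H) scaleN1r. Qed.

Lemma Jrel i j : (3 <= i <= n)%N -> (3 <= j <= n)%N ->
  br (e 1%N) (f i j) = f i.-1 j + f i j.-1.
Proof.
move=> Hi Hj; move: (H) => [_ _ _ H4]; have := H4 (e 1%N) (e i) (e j).
rewrite (brA H (e j) (e 1%N)) A1 // brNr A1 // (brA H (e j)).
move=> E; rewrite /f; move/eqP: E; rewrite -addrA -opprD subr_eq0 => /eqP ->.
by rewrite addrC.
Qed.

Lemma fn0 i : (2 <= i <= n - 3)%N -> f i n = 0.
Proof.
move=> Hi; rewrite /f.
have [/eqP->|ne2] := boolP (i == 2%N); first by rewrite A2 //; lia.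
have [/eqP->|ne3] := boolP (i == 3%N); first by rewrite A3 //; lia.
apply: Z1; lia.
Qed.

Lemma fxx i : f i i = 0.
Proof. by move: (H) => [_ _ H3 _]; rewrite /f H3. Qed.

Lemma fA i j : f i j = - f j i.
Proof. exact: brA. Qed.

Lemma base_le i j : (2 <= i)%N -> (i <= j)%N -> (j <= n)%N -> (i + j = 2 * n - 4)%N -> f i j = 0.
Proof.
move=> H2i Hij Hjn Hs.
have : (i = n - 4 \/ i = n - 3 \/ i = n - 2)%N by lia.
case=> [Ei|[Ei|Ei]].
- have -> : j = n by lia. by rewrite Ei fn0 //; lia.
- have -> : j = (n - 1)%N by lia. rewrite Ei.
  have := Jrel (n - 3) n ltac:(lia) ltac:(lia).
  have -> : f (n - 3)%N n = 0 by apply: fn0; lia.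
  have -> : ((n - 3).-1 = n - 4)%N by lia.
  rewrite fn0; last by lia.
  rewrite (br0r H) add0r => E; have -> : (n - 1 = n.-1)%N by lia. by rewrite -E.
- have -> : j = i by lia. exact: fxx.
Qed.

Lemma base i j : (2 <= i <= n)%N -> (2 <= j <= n)%N -> (i + j = 2 * n - 4)%N -> f i j = 0.
Proof.
move=> Hi Hj Hs; have [Hij|Hji] := leqP i j.
  apply: base_le => //; lia.
rewrite fA base_le ?oppr0 //; lia.
Qed.

Definition Plev s := forall i j, (2 <= i <= n)%N -> (2 <= j <= n)%N -> (i + j = s)%N -> f i j = 0.

Lemma step s : Plev s.+1 -> (s.+1 <= 2 * n - 4)%N -> Plev s.
Proof.
move=> HP Hs i; elim: i => [|i IH] j Hi Hj Hij; first by lia.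
have [/eqP Ei|ne2] := boolP (i.+1 == 2%N); first by rewrite /f Ei A2 //; lia.
have [/eqP Ej|nej] := boolP (j == n); first by rewrite Ej fn0 //; lia.
have := Jrel i.+1 j.+1 ltac:(lia) ltac:(lia).
rewrite /= HP //; try lia.
rewrite (br0r H) IH //; try lia.
by rewrite add0r.
Qed.

Lemma vanish i j : (2 <= i <= n)%N -> (2 <= j <= n)%N -> (i + j <= 2 * n - 4)%N -> f i j = 0.
Proof.
move=> Hi Hj Hs.
have main : forall m s, (s + m = 2 * n - 4)%N -> Plev s.
  elim=> [|m IH] s Hsm; first by move=> ? ? ? ? ?; apply: base; lia.
  apply: step; [apply: IH | ]; lia.
by apply: (main (2 * n - 4 - (i + j))%N (i + j)%N) => //; lia.
Qed.
End Struct.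



Section Lcs.
Context {F : fieldType} {V : vectType F} {br : V -> V -> V}.
Context (H : is_lie br) (n : nat) (e : nat -> V) (Hn : (6 <= n)%N).
Context (Hbas : basis_of fullv [seq e i | i <- iota 1 n]).
Context (Hfil : forall k, (2 <= k <= n)%N -> \dim (LCS br k) = (n - k)%N).
Context (A1 : forall h, (3 <= h <= n)%N -> br (e 1%N) (e h) = e h.-1).

Definition S k : {vspace V} := <<[seq e i | i <- iota 2 (n - k)]>>%VS.

Lemma dimS k : (1 <= k)%N -> \dim (S k) = (n - k)%N.
Proof.
move=> Hk; have fr := basis_free Hbas.
have [Hkn|Hkn] := leqP k n; last first.
  rewrite /S; have -> : (n - k = 0)%N by lia.
  by rewrite /= span_nil dimv0.
have E : iota 1 n = 1%N :: (iota 2 (n - k) ++ iota (2 + (n - k)) (k - 1)).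
  rewrite -iotaD; have -> : (n - k + (k - 1) = n.-1)%N by lia.
  by case: (n) Hn.
move: fr; rewrite E map_cons map_cat free_cons => /andP[_ /catl_free].
by rewrite /free size_map size_iota => /eqP.
Qed.

Lemma LCS_succ k : (1 <= k)%N -> LCS br k.+1 = brS br (LCS br k) fullv.
Proof. by case: k. Qed.

Lemma inLCS k : (1 <= k)%N -> forall i, (2 <= i <= n - k + 1)%N -> e i \in LCS br k.
Proof.
elim: k => [//|k IH] Hk i Hi.
have [->|Hk1] := eqVneq k 0%N; first by rewrite memvf.
rewrite LCS_succ //; last by lia.
have -> : e i = - br (e i.+1) (e 1%N).
  by rewrite -(brA H) A1 //; lia.
rewrite memvN brS_mem // ?memvf //; apply: IH; lia.
Qed.

Lemma LCS_S k : (2 <= k)%N -> LCS br k = S k.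
Proof.
elim: k => [//|k IH] Hk.
have [Hkn|Hkn] := leqP k.+1 n.
  apply/eqP; rewrite eq_sym eqEdim dimS; last by lia.
  rewrite Hfil ?leqnn ?andbT; last by lia.
  apply/span_subvP => _ /mapP[i Hi ->]; move: Hi; rewrite mem_iota => Hi.
  apply: inLCS; lia.
have -> : S k.+1 = 0%VS.
  rewrite /S; have -> : (n - k.+1 = 0)%N by lia.
  by rewrite /= span_nil.
have E : LCS br k = <<[::]>>%VS.
  have [Ek|Ek] := eqVneq k 1%N; first by lia.
  rewrite IH; last by lia.
  rewrite /S; have -> : (n - k = 0)%N by lia.
  by [].
rewrite LCS_succ; last by lia.
apply/eqP; rewrite -subv0 -(span_nil V).
by apply: (brS_sub _ _ [::] (vbasis fullv) H); rewrite ?E // (span_basis (vbasisP _)).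
Qed.

Lemma dimLCS k : (2 <= k)%N -> \dim (LCS br k) = (n - k)%N.
Proof. by move=> Hk; rewrite LCS_S // dimS //; lia. Qed.

Lemma brS_LCS_sub k l (U : {vspace V}) : (2 <= k)%N -> (2 <= l)%N ->
  (forall i j, (2 <= i <= n - k + 1)%N -> (2 <= j <= n - l + 1)%N -> br (e i) (e j) \in U) ->
  (brS br (LCS br k) (LCS br l) <= U)%VS.
Proof.
move=> Hk Hl HU.
have S1 : (LCS br k <= <<[seq e i | i <- iota 2 (n - k)]>>)%VS by rewrite LCS_S.
have S2 : (LCS br l <= <<[seq e i | i <- iota 2 (n - l)]>>)%VS by rewrite LCS_S.
apply: subv_trans (brS_sub _ _ _ _ H S1 S2) _.
apply/span_subvP => _ /allpairsP[[a b] /= [/mapP[i Hi ->] /mapP[j Hj ->] ->]].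
by move: Hi Hj; rewrite !mem_iota => Hi Hj; apply: HU; lia.
Qed.

Lemma dim_k1 l : (1 <= l)%N -> \dim (brS br (LCS br 1) (LCS br l)) = (n - l - 1)%N.
Proof.
move=> Hl; rewrite (brS_sym _ _ H) -LCS_succ // dimLCS; lia.
Qed.

Lemma dim_l1 k : (2 <= k)%N -> \dim (brS br (LCS br k) (LCS br 1)) = (n - k - 1)%N.
Proof.
move=> Hk; rewrite -LCS_succ ?dimLCS //; lia.
Qed.
End Lcs.



Section Dims.
Context {F : fieldType} {V : vectType F} {br : V -> V -> V}.
Context (H : is_lie br) (n : nat) (e : nat -> V) (Hn : (6 <= n)%N).
Context (Hbas : basis_of fullv [seq e i | i <- iota 1 n]).
Context (Hfil : forall k, (2 <= k <= n)%N -> \dim (LCS br k) = (n - k)%N).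
Context (A1 : forall h, (3 <= h <= n)%N -> br (e 1%N) (e h) = e h.-1).
Context (A2 : forall h, (1 <= h <= n)%N -> br (e 2%N) (e h) = 0).
Context (A3 : forall h, (2 <= h <= n)%N -> br (e 3%N) (e h) = 0).
Context (Z1 : forall k, (4 <= k < n - 2)%N -> br (e k) (e n) = 0).
Context (Z2 : br (e (n - 2)%N) (e (n - 1)%N) != 0).

Lemma dim_kl k l : (2 <= k)%N -> (2 <= l)%N ->
  \dim (brS br (LCS br k) (LCS br l)) = (if (k + l <= 5)%N then 1 else 0)%N.
Proof.
move=> Hk Hl; case: ifP => Hkl; last first.
  apply/eqP; rewrite dimv_eq0 -subv0.
  apply: (brS_LCS_sub H n e Hn Hbas Hfil A1) => // i j Hi Hj.
  rewrite (vanish H n e Hn A1 A2 A3 Z1) ?mem0v //; lia.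
set a := br (e (n - 2)%N) (e (n - 1)%N).
suff -> : brS br (LCS br k) (LCS br l) = <[a]>%VS by rewrite dim_vline Z2.
apply: subv_anti; apply/andP; split.
  apply: (brS_LCS_sub H n e Hn Hbas Hfil A1) => // i j Hi Hj.
  have [Hs|Hs] := leqP (i + j) (2 * n - 4).
    rewrite (vanish H n e Hn A1 A2 A3 Z1) ?mem0v //; lia.
  have : ((i = n - 2 /\ j = n - 1) \/ (i = n - 1 /\ j = n - 2) \/ (i = n - 1 /\ j = n - 1))%N by lia.
  case=> [[-> ->]|[[-> ->]|[-> ->]]].
  - exact: memv_line.
  - by rewrite (brA H) memvN memv_line.
  - by move: (H) => [_ _ H3 _]; rewrite H3 mem0v.
apply/subvP => x /vlineP[c ->]; apply: memvZ.
have [El|El] := eqVneq l 2%N.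
  apply: brS_mem => //; apply: (inLCS H n e Hn Hbas A1); lia.
rewrite /a (brA H) memvN.
apply: brS_mem => //; apply: (inLCS H n e Hn Hbas A1); lia.
Qed.
End Dims.



Definition dd (n k l : nat) : nat :=
  if k == 1%N then (n - l - 1)%N else if l == 1%N then (n - k - 1)%N
  else (if (k + l <= 5)%N then 1 else 0)%N.

Lemma trunc (n : nat) (G : nat -> {poly {poly int}}) : (6 <= n)%N ->
  \sum_(2 <= k < n.+1) (n - k - 1)%:R * G k = \sum_(2 <= k < n - 1) (n - k - 1)%:R * G k.
Proof.
move=> Hn; rewrite (big_cat_nat _ (n := (n - 1)%N)) /=; try lia.
rewrite [X in _ + X]big1_seq ?addr0 // => k /andP[_]; rewrite mem_index_iota => Hk.
have -> : (n - k - 1 = 0)%N by lia.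
by rewrite mul0r.
Qed.

Lemma ind_sum (n : nat) : (6 <= n)%N ->
  \sum_(2 <= k < n.+1) \sum_(2 <= l < n.+1) (if (k + l <= 5)%N then 1 else 0)%N%:R * tm k l
  = tm 2 2 + tm 2 3 + tm 3 2 :> {poly {poly int}}.
Proof.
move=> Hn.
have Z : forall k m, (6 <= k + m)%N -> \sum_(m <= l < n.+1) (if (k + l <= 5)%N then 1 else 0)%N%:R * tm k l = 0 :> {poly {poly int}}.
  move=> k m Hkm; apply: big1_seq => l /andP[_]; rewrite mem_index_iota => Hl.
  case: ifP => Hk; last by rewrite mul0r.
  lia.
have I2 : \sum_(2 <= l < n.+1) (if (2 + l <= 5)%N then 1 else 0)%N%:R * tm 2 l = tm 2 2 + tm 2 3 :> {poly {poly int}}.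
  rewrite big_ltn; last by lia.
  rewrite big_ltn; last by lia.
  by rewrite Z ?addr0 ?mul1r.
have I3 : \sum_(2 <= l < n.+1) (if (3 + l <= 5)%N then 1 else 0)%N%:R * tm 3 l = tm 3 2 :> {poly {poly int}}.
  rewrite big_ltn; last by lia.
  by rewrite Z ?addr0 ?mul1r.
rewrite big_ltn; last by lia.
rewrite I2 big_ltn; last by lia.
rewrite I3 big1_seq; last first.
  move=> k /andP[_]; rewrite mem_index_iota => Hk; apply: Z; lia.
by rewrite addr0. 
Qed.

Lemma sum_id (n : nat) : (6 <= n)%N ->
  \sum_(1 <= k < n.+1) \sum_(1 <= l < n.+1) (dd n k l)%:R * tm k l
  = HP0 n + tm 2 3 + tm 3 2 + tm 2 2.
Proof.
move=> Hn.
rewrite big_ltn; last by lia.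
rewrite [X in X + _]big_ltn; last by lia.
have E1 : \sum_(2 <= l < n.+1) (dd n 1 l)%:R * tm 1 l = \sum_(2 <= l < n.+1) (n - l - 1)%:R * tm 1 l.
  by apply: eq_bigr => l _.
have E2 : \sum_(2 <= k < n.+1) \sum_(1 <= l < n.+1) (dd n k l)%:R * tm k l =
   \sum_(2 <= k < n.+1) ((n - k - 1)%:R * tm k 1 +
      \sum_(2 <= l < n.+1) (if (k + l <= 5)%N then 1 else 0)%N%:R * tm k l).
  apply: eq_big_nat => k Hk; rewrite big_ltn; last by lia.
  rewrite /dd; have -> : (k == 1%N) = false by apply/negbTE; lia.
  congr (_ + _); apply: eq_big_nat => l Hl.
  by have -> : (l == 1%N) = false by apply/negbTE; lia.
rewrite E1 E2 big_split /= ind_sum // !trunc //.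
rewrite /HP0 /dd /=.
have -> : (n - 1 - 1 = n - 2)%N by lia.
have E3 : \sum_(2 <= k < n - 1) (n - k - 1)%:R * (tm k 1 + tm 1 k) =
  \sum_(2 <= k < n - 1) (n - k - 1)%:R * tm k 1 + \sum_(2 <= k < n - 1) (n - k - 1)%:R * tm 1 k :> {poly {poly int}}.
  by rewrite -big_split; apply: eq_bigr => k _; rewrite mulrDr.
rewrite E3.
ring.
Qed.


Theorem mainTheorem11 (R : realType) (n : nat) (V : vectType R[i])
    (br : V -> V -> V) :
  is_lie br -> (6 <= n)%N -> assoc_triple br (n - 2) (n - 2) n ->
  HP br = HP0 n + tm 2 3 + tm 3 2 + tm 2 2.
Proof.
move=> H Hn [[_ Hfil0] _ Hdim [e [Had Hz1 Hz2]]].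
move: Had; rewrite /adapted Hdim => -[Hb A1 A2 A3].
have Hbas : basis_of fullv [seq e i | i <- iota 1 n] by move: Hb; rewrite /is_basis Hdim.
have Hfil : forall k, (2 <= k <= n)%N -> \dim (LCS br k) = (n - k)%N.
  by move=> k Hk; rewrite Hfil0 Hdim.
move: Hz1; rewrite /z1_is Hdim => -[_ _ Hz1].
have Z1 : forall k, (4 <= k < n - 2)%N -> br (e k) (e n) = 0.
  move=> k Hk; case: (eqVneq (br (e k) (e n)) 0) => // ne.
  by exfalso; apply: (Hz1 k Hk); apply/eqP.
move: Hz2 => -[_ Hz2 _].
have Z2 : br (e (n - 2)%N) (e (n - 1)%N) != 0.
  by apply/eqP; have -> : (n - 1 = (n - 2).+1)%N by lia.
rewrite /HP Hdim -sum_id //.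
apply: eq_big_nat => k Hk; apply: eq_big_nat => l Hl; congr (_%:R * _).
rewrite /dd; have [->|Hk1] := eqVneq k 1%N.
  by rewrite (dim_k1 H n e Hn Hbas Hfil A1) //; lia.
have [->|Hl1] := eqVneq l 1%N.
  by rewrite (dim_l1 H n e Hn Hbas Hfil A1) //; lia.
by rewrite (dim_kl H n e Hn Hbas Hfil A1 A2 A3 Z1 Z2) //; lia.
Qed.
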